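(* There exist a sequence of Pauli Hamiltonians $H_n=\sum_ic_i^{(n)}P_i^{(n)}$ and states $|\psi_n\rangle$ such that $$\frac{D_n(\psi_n)}{\mathrm{Var}(H_n)|_{\psi_n}}\longrightarrow0\quad(n\to\infty),$$ where $D_n(\psi)=\sum_i(c_i^{(n)})^2\,(1-\langle\psi|P_i^{(n)}|\psi\rangle^2)$ and $\mathrm{Var}(H_n)|_\psi=\langle\psi|H_n^2|\psi\rangle-\langle\psi|H_n|\psi\rangle^2$.
   Context: A Pauli Hamiltonian is $H=\sum_ic_iP_i$ with real coefficients and distinct $n$-qubit Pauli strings $P_i\in\{I,X,Y,Z\}^{\otimes n}$. *)

(* Defs.v *)
From HB Require Import structures.
From mathcomp Require Import all_boot all_order all_algebra.
From mathcomp Require Import complex.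
From mathcomp Require Import all_classical all_reals topology normedtype sequences.
Set Implicit Arguments. Unset Strict Implicit. Unset Printing Implicit Defensive.
Import Order.TTheory GRing.Theory Num.Theory.
Local Open Scope ring_scope.
Local Open Scope complex_scope.

Section Pauli.
Variable R : realType.
Local Notation C := R[i].

(* Single-qubit Pauli matrices, encoded by 'I_4 : 0 = I, 1 = X, 2 = Y, 3 = Z. *)
Definition sigma (p : 'I_4) : 'M[C]_2 :=
  \matrix_(a < 2, b < 2)
    match nat_of_ord p, nat_of_ord a, nat_of_ord b with
    | 0, 0, 0 => 1 | 0, 1, 1 => 1
    | 1, 0, 1 => 1 | 1, 1, 0 => 1
    | 2, 0, 1 => - 'i | 2, 1, 0 => 'i
    | 3, 0, 0 => 1 | 3, 1, 1 => -1
    | _, _, _ => 0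
    end.

Definition pauli_string (n : nat) := {ffun 'I_n -> 'I_4}.

Definition qbit (n : nat) (i : 'I_(2 ^ n)) (j : 'I_n) : 'I_2 :=
  inord ((nat_of_ord i %/ 2 ^ j) %% 2).

(* Matrix of the Pauli string P = P_0 (x) ... (x) P_{n-1} in the computational
   basis (qubit j is bit j of the basis index): entrywise tensor product. *)
Definition pauli_mx (n : nat) (P : pauli_string n) : 'M[C]_(2 ^ n) :=
  \matrix_(a, b) \prod_(j < n) sigma (P j) (qbit a j) (qbit b j).

(* A Pauli Hamiltonian H = sum_P c_P P with real coefficients, indexed by
   (distinct) Pauli strings; strings absent from H have coefficient 0. *)
Definition hamiltonian_mx (n : nat) (c : {ffun pauli_string n -> R}) : 'M[C]_(2 ^ n) :=
  \sum_(P : pauli_string n) (c P)%:C *: pauli_mx P.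

Definition expect (n : nat) (psi : 'cV[C]_(2 ^ n)) (A : 'M[C]_(2 ^ n)) : C :=
  ((map_mx (@conjc R) psi)^T *m A *m psi) 0 0.

Definition is_state (n : nat) (psi : 'cV[C]_(2 ^ n)) : Prop :=
  expect psi 1%:M = 1.

(* D_n(psi) = sum_i c_i^2 (1 - <psi|P_i|psi>^2)  (expectations of Hermitian
   operators are real; we take their real part). *)
Definition Dn (n : nat) (c : {ffun pauli_string n -> R}) (psi : 'cV[C]_(2 ^ n)) : R :=
  \sum_(P : pauli_string n) (c P) ^+ 2 * (1 - (@complex.Re R (expect psi (pauli_mx P))) ^+ 2).

Definition variance (n : nat) (c : {ffun pauli_string n -> R}) (psi : 'cV[C]_(2 ^ n)) : R :=
  @complex.Re R (expect psi (hamiltonian_mx c *m hamiltonian_mx c))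
  - (@complex.Re R (expect psi (hamiltonian_mx c))) ^+ 2.

End Pauli.

(* Main.v *)
Require Import Defs.
From HB Require Import structures.
From mathcomp Require Import all_boot all_order all_algebra.
From mathcomp Require Import complex.
From mathcomp Require Import all_classical all_reals topology normedtype sequences.
From mathcomp Require Import ring.
Import Order.TTheory GRing.Theory Num.Theory numFieldNormedType.Exports.

Lemma bits_inj n (x y : nat) : (x < 2^n) -> (y < 2^n) ->
  (forall j, (j < n) -> (x %/ 2^j) %% 2 = (y %/ 2^j) %% 2) -> x = y.
Proof.
elim: n x y => [|n IH] x y.
  by rewrite expn0 !ltnS !leqn0 => /eqP-> /eqP->.
move=> hx hy hb.
rewrite (divn_eq x 2) (divn_eq y 2).
have h0 := hb 0 (ltn0Sn n). rewrite !expn0 !divn1 in h0.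
have e : (x %/ 2 = y %/ 2).
apply: IH; first by rewrite ltn_divLR // -expnSr.
  by rewrite ltn_divLR // -expnSr.
move=> j hj; have h := hb j.+1 hj; by rewrite !expnS !divnMA in h.
by rewrite e h0.
Qed.

Lemma bits_all1 n j : (j < n) -> (((2^n).-1 %/ 2^j) %% 2 = 1).
Proof.
move=> hj.
have -> : (2^n).-1 = ((2^(n-j)).-1 * 2^j + (2^j).-1).
  have h1 : (0 < 2^(n-j)) by rewrite expn_gt0.
  have h2 : (0 < 2^j) by rewrite expn_gt0.
  rewrite -{1}(subnKC (ltnW hj)) expnD.
  move: h1 h2; set a := 2^(n-j); set b := 2^j => h1 h2.
  rewrite mulnC; case: a h1 => // a _; case: b h2 => // b _.
  by rewrite mulSn addSn /= addnC.
rewrite divnMDl ?expn_gt0 // (divn_small (m := (2^j).-1)) ?addn0; last by rewrite ltn_predL expn_gt0.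
rewrite modn2.
have := oddS (2^(n-j)).-1; rewrite prednK ?expn_gt0 // oddX /=.
by rewrite subn_eq0 leqNgt hj /= => /esym /negbFE ->.
Qed.

Section S2.
Local Open Scope ring_scope.

Variable R : realType.
Local Notation C := R[i].

Definition p0 : 'I_4 := @Ordinal 4 0 isT.
Definition p3 : 'I_4 := @Ordinal 4 3 isT.

Lemma sigma_diag (b : bool) (t : 'I_2) :
  @sigma R (if b then p3 else p0) t t = if b && (t != 0 :> nat) then -1 else 1.
Proof. rewrite /sigma mxE; case: b; case: t => [[|[|t]] Ht] //=. Qed.

Lemma sigma_off (b : bool) (t u : 'I_2) : t != u ->
  @sigma R (if b then p3 else p0) t u = 0.
Proof.
rewrite /sigma mxE; case: b; case: t => [[|[|t]] Ht]; case: u => [[|[|u]] Hu] //=.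
Qed.

Lemma qbitE n (x : 'I_(2^n)) (j : 'I_n) : (qbit x j : nat) = ((x %/ 2^j) %% 2)%N.
Proof. by rewrite /qbit inordK // ltn_mod. Qed.

Definition Zs n (j : 'I_n) : pauli_string n := [ffun k => if k == j then p3 else p0].

Arguments Zs {n}.
Lemma Zs_inj n : injective (@Zs n).
Proof.
move=> i j h; have := congr1 (fun f : pauli_string n => f i) h; rewrite !ffunE eqxx.
by case: eqP => // _ /(congr1 val).
Qed.

Lemma Zs_off n (j : 'I_n) (x y : 'I_(2^n)) : x != y -> @pauli_mx R n (Zs j) x y = 0.
Proof.
move=> nxy.
have [k hk] : exists k : 'I_n, qbit x k != qbit y k.
  apply/existsP; apply: contraR nxy; rewrite negb_exists => /forallP hb.
  apply/eqP/val_inj/bits_inj => //= k hkn.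
  have := hb (Ordinal hkn); rewrite negbK => /eqP/(congr1 (@nat_of_ord 2)).
  by rewrite !qbitE.
rewrite /pauli_mx mxE (bigD1 k) //= ffunE.
by rewrite sigma_off // mul0r.
Qed.

Lemma Zs_diag n (j : 'I_n) (x : 'I_(2^n)) :
  @pauli_mx R n (Zs j) x x = if ((x %/ 2^j) %% 2 != 0)%N then -1 else 1.
Proof.
rewrite /pauli_mx mxE (bigD1 j) //= big1 ?mulr1.
  by rewrite ffunE eqxx (sigma_diag true) qbitE.
move=> k hk; by rewrite ffunE (negbTE hk) (sigma_diag false).
Qed.

End S2.



Set Implicit Arguments. Unset Strict Implicit.
Section S3.
Local Open Scope ring_scope.
Local Open Scope complex_scope.
Variable R : realType.
Local Notation C := R[i].

Lemma pos2n n : (0 < 2^n)%N. Proof. by rewrite expn_gt0. Qed.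
Lemma predlt n : ((2^n).-1 < 2^n)%N. Proof. by rewrite ltn_predL expn_gt0. Qed.
Definition i0 n : 'I_(2^n) := Ordinal (pos2n n).
Definition ib n : 'I_(2^n) := Ordinal (predlt n).
Definition sr : R := 3 / 5.
Definition tr : R := 4 / 5.
Definition psi n : 'cV[C]_(2^n) :=
  \col_i (if i == i0 n then (if n == 0%N then 1 else sr%:C)
          else if i == ib n then tr%:C else 0).

Lemma ne0b n : (0 < n)%N -> i0 n != ib n.
Proof.
move=> hn; rewrite -val_eqE /= eq_sym -lt0n -ltnS prednK ?expn_gt0 //.
by rewrite -[1%N]/(2^0)%N ltn_exp2l.
Qed.


Lemma expectE n (v : 'cV[C]_(2^n)) A :
  expect v A = \sum_y \sum_x conjc (v x 0) * A x y * v y 0.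
Proof.
rewrite /expect mxE; apply: eq_bigr => y _; rewrite mxE big_distrl /=.
by apply: eq_bigr => x _; rewrite !mxE.
Qed.

Lemma sum2 N (a b : 'I_N) (g : 'I_N -> C) : a != b ->
  (forall x, x != a -> x != b -> g x = 0) -> \sum_x g x = g a + g b.
Proof.
move=> ne h; rewrite (bigD1 a) //= (bigD1 b) /=; last by rewrite eq_sym.
by rewrite big1 ?addr0 // => x /andP[xa xb]; exact: h.
Qed.

Lemma sum1 N (a : 'I_N) (g : 'I_N -> C) : (forall x, x != a -> g x = 0) -> \sum_x g x = g a.
Proof. by move=> h; rewrite (bigD1 a) //= big1 ?addr0 // => x; exact: h. Qed.

Lemma ord_2e0 (x : 'I_(2^0)) : x = i0 0.
Proof. by apply/val_inj; case: x => [[|m] h]. Qed.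

Lemma psi0 n : (0 < n)%N -> psi n (i0 n) 0 = sr%:C.
Proof. by move=> hn; rewrite mxE eqxx; case: n hn. Qed.
Lemma psib n : (0 < n)%N -> psi n (ib n) 0 = tr%:C.
Proof. by move=> hn; rewrite mxE eqxx eq_sym (negbTE (ne0b hn)). Qed.
Lemma psio n x : x != i0 n -> x != ib n -> psi n x 0 = 0.
Proof. by move=> h1 h2; rewrite mxE (negbTE h1) (negbTE h2). Qed.

Lemma expect_diag n (a b : R) (A : 'M[C]_(2^n)) : (0 < n)%N ->
  A (i0 n) (ib n) = 0 -> A (ib n) (i0 n) = 0 ->
  A (i0 n) (i0 n) = a%:C -> A (ib n) (ib n) = b%:C ->
  expect (psi n) A = (sr ^+ 2 * a + tr ^+ 2 * b)%:C.
Proof.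
move=> hn h1 h2 h3 h4.
rewrite expectE (sum2 (ne0b hn)); last first.
  by move=> y ya yb; rewrite big1 // => x _; rewrite (psio ya yb) mulr0.
rewrite !(sum2 (ne0b hn)); first last.
- by move=> x xa xb; rewrite (psio xa xb) conjc0 !mul0r.
- by move=> x xa xb; rewrite (psio xa xb) conjc0 !mul0r.
rewrite psi0 // psib // !conjc_real h1 h2 h3 h4.
rewrite rmorphD !rmorphM.
ring.
Qed.

Lemma state n : is_state (psi n).
Proof.
rewrite /is_state.
case: n => [|n].
  rewrite expectE (sum1 (a:=i0 0)) => [|y hy]; last by rewrite (ord_2e0 y) eqxx in hy.
  rewrite (sum1 (a:=i0 0)) => [|y hy]; last by rewrite (ord_2e0 y) eqxx in hy.
  by rewrite !mxE eqxx /= !mulr1 oppr0.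
rewrite (expect_diag (a:=1) (b:=1)) //; first last.
- by rewrite mxE eqxx.
- by rewrite mxE eqxx.
- by rewrite mxE eq_sym (negbTE (ne0b _)).
- by rewrite mxE (negbTE (ne0b _)).
by rewrite /sr /tr; apply/eqP; rewrite eq_complex /=; apply/andP; split; apply/eqP; field.
Qed.

End S3.
Unset Implicit Arguments.



Set Implicit Arguments. Unset Strict Implicit.
Section S4.
Local Open Scope ring_scope.
Local Open Scope complex_scope.
Variable R : realType.
Local Notation C := R[i].
Local Notation psi := (@psi R).
Local Notation sr := (@sr R).
Local Notation tr := (@tr R).

Definition cc n : {ffun pauli_string n -> R} :=
  [ffun P => ((P \in Zs n @: [set: 'I_n]%SET) : nat)%:R].

Lemma sum_cc n (F : pauli_string n -> R) (G : R -> R) : G 0 = 0 -> G 1 = 1 ->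
  \sum_P G (cc n P) * F P = \sum_j F (Zs n j).
Proof.
move=> G0 G1.
transitivity (\sum_(P in Zs n @: [set: 'I_n]%SET) F P).
  rewrite [RHS]big_mkcond /=; apply: eq_bigr => P _; rewrite ffunE.
  by case: (P \in _) => /=; rewrite ?G0 ?G1 ?mul0r ?mul1r.
rewrite big_imset /=; last by move=> x y _ _; apply: Zs_inj.
by apply: eq_bigl => j; rewrite finset.in_setT.
Qed.

Lemma ham n : hamiltonian_mx (cc n) = \sum_j @pauli_mx R n (Zs n j).
Proof.
rewrite /hamiltonian_mx.
transitivity (\sum_(P in Zs n @: [set: 'I_n]%SET) @pauli_mx R n P).
  rewrite [RHS]big_mkcond /=; apply: eq_bigr => P _; rewrite ffunE.
  by case: (P \in _) => /=; rewrite ?scale0r // rmorph1 scale1r.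
rewrite big_imset /=; last by move=> x y _ _; apply: Zs_inj.
by apply: eq_bigl => j; rewrite finset.in_setT.
Qed.


Lemma H_off n x y : x != y -> hamiltonian_mx (cc n) x y = 0.
Proof. by move=> h; rewrite ham summxE big1 // => j _; exact: Zs_off. Qed.

Lemma H_00 n : hamiltonian_mx (cc n) (i0 n) (i0 n) = (n%:R)%:C.
Proof.
rewrite ham summxE (eq_bigr (fun _ => 1)) => [|j _]; last by rewrite Zs_diag /= div0n mod0n.
by rewrite sumr_const card_ord rmorph_nat.
Qed.

Lemma H_bb n : hamiltonian_mx (cc n) (ib n) (ib n) = (- n%:R)%:C.
Proof.
rewrite ham summxE (eq_bigr (fun _ => -1)) => [|j _]; last by rewrite Zs_diag /= bits_all1.
by rewrite sumr_const card_ord rmorphN rmorph_nat mulNrn.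
Qed.

Lemma mulmx_diag N (A : 'M[C]_N) x y : (forall x y, x != y -> A x y = 0) ->
  (A *m A) x y = A x x * A x y.
Proof.
move=> hd; rewrite mxE (bigD1 x) //= big1 ?addr0 // => k hk.
by rewrite (hd x k) ?mul0r // eq_sym.
Qed.

Lemma Dn_val n : (0 < n)%N -> Dn (cc n) (psi n) = n%:R * (1 - (sr^+2 - tr^+2)^+2).
Proof.
move=> hn; rewrite /Dn (@sum_cc n _ (fun x : R => x ^+ 2)) ?expr1n ?expr0n //.
rewrite (eq_bigr (fun _ => 1 - (sr^+2 - tr^+2)^+2)) => [|j _].
  by rewrite sumr_const card_ord mulr_natl.
rewrite (expect_diag (a := 1) (b := -1)) //.
- by rewrite /= mulr1 mulrN1.
- by apply: Zs_off; exact: (ne0b hn).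
- by apply: Zs_off; rewrite eq_sym ne0b.
- by rewrite Zs_diag /= div0n mod0n rmorph1.
- by rewrite Zs_diag /= bits_all1 // rmorphN1.
Qed.

Lemma Var_val n : (0 < n)%N -> variance (cc n) (psi n) =
  (sr^+2 * (n%:R * n%:R) + tr^+2 * (n%:R * n%:R)) - (sr^+2 * n%:R + tr^+2 * (- n%:R))^+2.
Proof.
move=> hn; have hd := @H_off n.
have ne1 : i0 n != ib n := ne0b hn.
have ne2 : ib n != i0 n by rewrite eq_sym.
rewrite /variance (expect_diag (a := n%:R * n%:R) (b := n%:R * n%:R)) //; last first.
- by rewrite mulmx_diag // H_bb rmorphM rmorphN mulrNN.
- by rewrite mulmx_diag // H_00 rmorphM.
- by rewrite mulmx_diag // (hd (ib n) (i0 n)) ?mulr0 // eq_sym; exact: (ne0b hn).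
- by rewrite mulmx_diag // (hd (i0 n) (ib n)) ?mulr0 //; exact: (ne0b hn).
rewrite (expect_diag (a := n%:R) (b := - n%:R)) //.
- by rewrite hd.
- by rewrite hd.
- exact: H_00.
- exact: H_bb.
Qed.

End S4.
Unset Implicit Arguments.


Local Open Scope ring_scope.
Local Open Scope classical_set_scope.

Lemma vsimp (R : realType) (x : R) : sr R ^+ 2 * (x * x) + tr R ^+ 2 * (x * x) -
     (sr R ^+ 2 * x + tr R ^+ 2 * - x) ^+ 2 = 576 / 625 * (x * x).
Proof. by rewrite /sr /tr; field. Qed.

Lemma dsimp (R : realType) (x : R) : x * (1 - (sr R ^+ 2 - tr R ^+ 2) ^+ 2) = 576 / 625 * x.
Proof. by rewrite /sr /tr; field. Qed.

Theorem proposition1 (R : realType) :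
  exists (c : forall n : nat, {ffun pauli_string n -> R})
         (psi : forall n : nat, 'cV[R[i]]_(2 ^ n)),
    (forall n, is_state (psi n)) /\
    (\forall n \near \oo, variance (c n) (psi n) != 0) /\
    (fun n => Dn (c n) (psi n) / variance (c n) (psi n)) @ \oo --> (0 : R).
Proof.
exists (@cc R), (@psi R); split; first exact: state.
split.
  exists 1%N => // n /= hn.
  rewrite Var_val //.
  rewrite vsimp.
  rewrite mulf_neq0 //; first by rewrite gt_eqF // divr_gt0.
  by rewrite mulf_neq0 // pnatr_eq0 -lt0n.
rewrite -(cvg_shiftS (fun n => Dn (cc R n) (psi R n) / variance (cc R n) (psi R n))); apply: (cvg_trans _ cvg_harmonic); apply: near_eq_cvg.
apply: nearW => n /=.
have hn : n.+1%:R != 0 :> R by rewrite pnatr_eq0.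
rewrite Dn_val // Var_val // vsimp dsimp.
field.
by rewrite addrC natr1.
Qed.
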